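(* Let $T$ be a right $R$-module which is partial cosilting with respect to an injective copresentation $0\to T\to Q_0\xrightarrow{\zeta}Q_1$. Then there exist a right $R$-module $M$ and an injective copresentation $0\to T\oplus M\to Q_0'\xrightarrow{\zeta'}Q_1'$ such that $T\oplus M$ is cosilting with respect to $\zeta'$ and $\mathcal{B}_\zeta=\mathcal{B}_{\zeta'}$.
   Context: All modules are right modules over a unital associative ring $R$. For $\zeta:Q_0\to Q_1$, $\mathcal{B}_\zeta=\{X \mid \operatorname{Hom}_R(X,\zeta):\operatorname{Hom}_R(X,Q_0)\to\operatorname{Hom}_R(X,Q_1) \text{ is an epimorphism}\}$. $\operatorname{Cogen}(T)$ is the class of modules embeddable in a direct product of copies of $T$. An injective copresentation of $T$ is an exact sequence $0\to T\to Q_0\xrightarrow{\zeta}Q_1$ with $Q_0,Q_1$ injective. $T$ is partial cosilting with respect to $\zeta$ if $0\to T\to Q_0\xrightarrow{\zeta}Q_1$ is an injective copresentation, $T\in\mathcal{B}_\zeta$, and $\mathcal{B}_\zeta$ is closed under direct products; $T$ is cosilting with respect to $\zeta$ if $0\to T\to Q_0\xrightarrow{\zeta}Q_1$ is an injective copresentation and $\operatorname{Cogen}(T)=\mathcal{B}_\zeta$. *)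

(* Defs.v *)
(* Right R-modules are modelled as left modules over the
   converse ring R^c, i.e. as MathComp [lmodType R^c]. *)
From HB Require Import structures.
From mathcomp Require Import all_boot all_order all_algebra.
Set Implicit Arguments. Unset Strict Implicit. Unset Printing Implicit Defensive.
Import GRing.Theory.
Local Open Scope ring_scope.

Notation rmodType R := (lmodType (R^c)).

Definition injective_module (R : pzRingType) (Q : rmodType R) : Prop :=
  forall (A B : rmodType R) (f : {linear A -> B}) (g : {linear A -> Q}),
    injective f -> exists h : {linear B -> Q}, forall a, h (f a) = g a.

Definition injective_copresentation (R : pzRingType) (T Q0 Q1 : rmodType R)
  (iota : {linear T -> Q0}) (zeta : {linear Q0 -> Q1}) : Prop :=
  [/\ injective_module Q0, injective_module Q1, injective iota &
      forall q : Q0, zeta q = 0 <-> exists t : T, iota t = q].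

Definition B_class (R : pzRingType) (Q0 Q1 : rmodType R)
  (zeta : {linear Q0 -> Q1}) (X : rmodType R) : Prop :=
  forall g : {linear X -> Q1}, exists f : {linear X -> Q0},
    forall x, zeta (f x) = g x.

(* X is cogenerated by T: X embeds into a product T^I, i.e. there is a
   family of homomorphisms X -> T (the components of the embedding) which is
   jointly injective. *)
Definition Cogen (R : pzRingType) (T X : rmodType R) : Prop :=
  exists (I : Type) (f : I -> {linear X -> T}),
    forall x : X, (forall i, f i x = 0) -> x = 0.

Definition is_product (R : pzRingType) (I : Type) (Xs : I -> rmodType R)
  (P : rmodType R) (p : forall i, {linear P -> Xs i}) : Prop :=
  forall (Y : rmodType R) (g : forall i, {linear Y -> Xs i}),
    exists h : {linear Y -> P},
      (forall i y, p i (h y) = g i y) /\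
      (forall h' : {linear Y -> P}, (forall i y, p i (h' y) = g i y) ->
         forall y, h' y = h y).

Definition closed_under_products (R : pzRingType) (C : rmodType R -> Prop) : Prop :=
  forall (I : Type) (Xs : I -> rmodType R) (P : rmodType R)
         (p : forall i, {linear P -> Xs i}),
    is_product p -> (forall i, C (Xs i)) -> C P.

Definition partial_cosilting (R : pzRingType) (T Q0 Q1 : rmodType R)
  (iota : {linear T -> Q0}) (zeta : {linear Q0 -> Q1}) : Prop :=
  [/\ injective_copresentation iota zeta, B_class zeta T &
      closed_under_products (B_class zeta)].

Definition cosilting (R : pzRingType) (T Q0 Q1 : rmodType R)
  (iota : {linear T -> Q0}) (zeta : {linear Q0 -> Q1}) : Prop :=
  injective_copresentation iota zeta /\
  (forall X : rmodType R, Cogen T X <-> B_class zeta X).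

(* Main.v *)
Require Import Defs.
From HB Require Import structures.
From mathcomp Require Import all_boot all_order all_algebra.
From mathcomp Require Import boolp classical_sets functions.
Set Implicit Arguments. Unset Strict Implicit. Unset Printing Implicit Defensive.
Import Order.TTheory GRing.Theory Num.Theory.
Local Open Scope ring_scope.


Definition frac (r : rat) : rat := r - (Num.floor r)%:~R.

Lemma fracZ r (z : int) : frac (r + z%:~R) = frac r.
Proof.
rewrite /frac floorDrz ?intr_int // intrKfloor rmorphD /=.
by rewrite opprD addrACA subrr addr0.
Qed.

Lemma frac_frac r : frac (frac r) = frac r.
Proof.
have E : frac r = r + (- Num.floor r)%:~R by rewrite /frac intrN.
by rewrite {1}E fracZ.
Qed.

Lemma fracDl a b : frac (frac a + b) = frac (a + b).
Proof.
have E : frac a + b = (a + b) + (- Num.floor a)%:~R by rewrite /frac intrN addrAC.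
by rewrite E fracZ.
Qed.


Lemma fracDr a b : frac (a + frac b) = frac (a + b).
Proof. by rewrite addrC fracDl addrC. Qed.

Lemma frac_int (z : int) : frac z%:~R = 0.
Proof. by rewrite -[z%:~R]add0r fracZ /frac floor0 subr0. Qed.

Record qz := QZ { qval : rat; _ : frac qval == qval }.
HB.instance Definition _ := [isSub for qval].
HB.instance Definition _ := [Choice of qz by <:].

Definition mkq (r : rat) : qz := @QZ (frac r) (introT eqP (frac_frac r)).

Lemma qvalK x : mkq (qval x) = x.
Proof. by apply: val_inj => /=; case: x => v /= /eqP. Qed.

Lemma mkq_eq a b : frac a = frac b -> mkq a = mkq b.
Proof. by move=> E; apply: val_inj => /=. Qed.

Definition qadd x y := mkq (qval x + qval y).
Definition qopp x := mkq (- qval x).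
Definition qzero := mkq 0.

Lemma qaddA : associative qadd.
Proof. by move=> x y z; apply: mkq_eq => /=; rewrite fracDl fracDr addrA. Qed.
Lemma qaddC : commutative qadd.
Proof. by move=> x y; rewrite /qadd addrC. Qed.
Lemma qadd0 : left_id qzero qadd.
Proof. by move=> x; rewrite -[RHS]qvalK; apply: mkq_eq => /=; rewrite fracDl add0r. Qed.
Lemma qaddN : left_inverse qzero qopp qadd.
Proof. by move=> x; apply: mkq_eq => /=; rewrite fracDl addNr. Qed.

HB.instance Definition _ := GRing.isZmodule.Build qz qaddA qaddC qadd0 qaddN.

Lemma fracN b : frac (- frac b) = frac (- b).
Proof.
have -> : - frac b = - b + (Num.floor b)%:~R by rewrite /frac opprB addrC.
by rewrite fracZ.
Qed.

Lemma mkqB a b : mkq (a - b) = mkq a - mkq b.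
Proof.
apply: val_inj => /=; rewrite /GRing.add /GRing.opp /=.
by rewrite fracDl fracN fracDr.
Qed.

HB.instance Definition _ := GRing.isZmodMorphism.Build rat qz mkq mkqB.

Lemma mkq_int (z : int) : mkq z%:~R = 0.
Proof. by apply: val_inj => /=; rewrite frac_int /frac floor0 subr0. Qed.

Lemma qz_div (d : qz) (n : nat) : (0 < n)%N -> exists e : qz, e *+ n = d.
Proof.
move=> n0; exists (mkq (qval d / n%:R)); rewrite -raddfMn /= -[_ *+ n]mulr_natr.
by rewrite divfK ?pnatr_eq0 -?lt0n // qvalK.
Qed.

Lemma qz_cog (n : nat) : (1 < n)%N ->
  mkq (n%:R^-1) != 0 /\ forall q : int, mkq (n%:R^-1) *~ (q * n%:R) = 0.
Proof.
move=> n1; split.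
  apply/negP => /eqP /(congr1 qval) /=.
  rewrite /frac (_ : Num.floor _ = 0) ?subr0.
    by apply/eqP; rewrite invr_eq0 pnatr_eq0 -lt0n ltnW.
  apply: floor_def; rewrite add0r /= invr_ge0 ler0n /=.
  by rewrite invf_lt1 ?ltr0n ?ltr1n // ltnW.
move=> q; rewrite -raddfMz /=.
have -> : (n%:R^-1 : rat) *~ (q * n%:R) = q%:~R; last exact: mkq_int.
rewrite -mulrzr intrM mulrCA mulrz_nat mulVf ?mulr1 //.
by rewrite pnatr_eq0 -lt0n ltnW.
Qed.

Section ZExt.
Variables (B D : zmodType).
Hypothesis Ddiv : forall (d : D) (n : nat), (0 < n)%N -> exists e : D, e *+ n = d.

Definition subgrp (S : B -> Prop) := S 0 /\ forall x y, S x -> S y -> S (x - y).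
Definition addon (S : B -> Prop) (k : B -> D) :=
  forall x y, S x -> S y -> k (x - y) = k x - k y.

Section SG.
Variables (S : B -> Prop) (k : B -> D).
Hypotheses (sS : subgrp S) (ak : addon S k).

Lemma sgN x : S x -> S (- x).
Proof. by case: sS => S0 SB Sx; rewrite -sub0r; apply: SB. Qed.
Lemma sgD x y : S x -> S y -> S (x + y).
Proof. by case: sS => S0 SB Sx Sy; rewrite -[y]opprK; apply: SB => //; apply: sgN. Qed.
Lemma sgMn x n : S x -> S (x *+ n).
Proof. move=> Sx; elim: n => [|n IH]; first by case: sS. by rewrite mulrS; apply: sgD. Qed.
Lemma sgMz x m : S x -> S (x *~ m).
Proof. by move=> Sx; case: m => n; rewrite ?NegzE ?mulrNz; [apply: sgMn | apply/sgN/sgMn]. Qed.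

Lemma ak0 : k 0 = 0.
Proof. by case: sS => S0 _; have := ak S0 S0; rewrite !subrr. Qed.
Lemma akN x : S x -> k (- x) = - k x.
Proof. by case: sS => S0 _ Sx; rewrite -sub0r ak // ak0 sub0r. Qed.
Lemma akD x y : S x -> S y -> k (x + y) = k x + k y.
Proof. by move=> Sx Sy; rewrite -[y]opprK ak ?akN ?opprK //; apply: sgN. Qed.
Lemma akMn x n : S x -> k (x *+ n) = k x *+ n.
Proof. move=> Sx; elim: n => [|n IH]; first exact: ak0. by rewrite !mulrS akD ?IH //; apply: sgMn. Qed.
Lemma akMz x m : S x -> k (x *~ m) = k x *~ m.
Proof.
by move=> Sx; case: m => n; rewrite ?NegzE ?mulrNz ?akN ?akMn //; apply: sgMn.
Qed.

Lemma period b : (exists n, (0 < n)%N /\ S (b *+ n)) ->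
  exists n, [/\ (0 < n)%N, S (b *+ n) & forall m : int, S (b *~ m) -> (n%:Z %| m)%Z].
Proof.
move=> ex.
have exP : exists n, (0 < n)%N && `[< S (b *+ n) >].
  by case: ex => n [n0 Sn]; exists n; rewrite n0; apply/asboolP.
case: (ex_minnP exP) => n /andP [n0 /asboolP Sn] minn.
exists n; split => // m Sm; apply/dvdz_mod0P.
have r0 : 0 <= (m %% n)%Z by rewrite modz_ge0 // -lt0n n0.
have rlt : (m %% n)%Z < n by rewrite ltz_pmod // ltz_nat.
case Er: (m %% n)%Z r0 rlt => [r|r] // _ rlt.
have Sr : S (b *+ r).
  have -> : b *+ r = b *~ m - (b *+ n) *~ (m %/ n)%Z.
    rewrite {1}(divz_eq m n) mulrzDr Er [(_ * _)%R]mulrC mulrzA.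
    by rewrite addrAC subrr add0r.
  by case: sS => _ SB; apply: SB => //; apply: sgMz.
case: r Er rlt Sr => // r Er rlt Sr.
have := minn r.+1; rewrite (asboolT Sr) /= => /(_ isT).
by move: rlt; rewrite ltz_nat => /leq_trans H /H; rewrite ltnn.
Qed.

Section Step.
Variables (b : B) (e : D).
Hypothesis compat : forall m : int, S (b *~ m) -> k (b *~ m) = e *~ m.

Definition S' (y : B) := exists s m, S s /\ y = s + b *~ m.

Lemma wd s s' m m' : S s -> S s' -> s + b *~ m = s' + b *~ m' ->
  k s + e *~ m = k s' + e *~ m'.
Proof.
move=> Ss Ss' E.
have E2 : b *~ (m - m') = s' - s.
  by rewrite mulrzBr; apply/eqP; rewrite subr_eq addrAC -E addrAC subrr add0r.
have Sd : S (s' - s) by case: sS => _ SB; apply: SB.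
have := @compat (m - m'); rewrite E2 => /(_ Sd); rewrite ak // mulrzBr => /eqP.
move=> /eqP H; rewrite -[k s'](subrK (k s)) H.
by rewrite [RHS]addrAC subrK addrC.
Qed.

Definition k' (y : B) : D :=
  match pselect (S' y) with
  | left H => let (s, Hs) := cid H in let (m, _) := cid Hs in k s + e *~ m
  | right _ => 0
  end.

Lemma k'E s m : S s -> k' (s + b *~ m) = k s + e *~ m.
Proof.
move=> Ss; rewrite /k'; case: pselect => [H|[]]; last by exists s, m.
case: (cid H) => s0 Hs; case: (cid Hs) => m0 [Ss0 E].
by apply: wd => //; rewrite -E.
Qed.

Lemma step_sub : subgrp S'.
Proof.
case: sS => S0 SB; split; first by exists 0, 0; rewrite addr0.
move=> _ _ [s1 [m1 [S1 ->]]] [s2 [m2 [S2 ->]]].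
exists (s1 - s2), (m1 - m2); split; first exact: SB.
by rewrite mulrzBr opprD addrACA.
Qed.

Lemma step_add : addon S' k'.
Proof.
case: sS => S0 SB.
move=> _ _ [s1 [m1 [S1 ->]]] [s2 [m2 [S2 ->]]].
have -> : s1 + b *~ m1 - (s2 + b *~ m2) = (s1 - s2) + b *~ (m1 - m2).
  by rewrite mulrzBr opprD addrACA.
rewrite k'E; last by apply: SB.
by rewrite k'E // k'E // ak // mulrzBr opprD addrACA.
Qed.

Lemma step_b : S' b /\ k' b = e.
Proof.
case: sS => S0 _.
have E : b = 0 + b *~ 1 by rewrite add0r.
split; first by exists 0, 1.
by rewrite {1}E k'E // ak0 // add0r.
Qed.

Lemma step_ext x : S x -> S' x /\ k' x = k x.
Proof.
have E : x = x + b *~ 0 by rewrite addr0.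
by move=> Sx; split; [exists x, 0 | rewrite {1}E k'E // addr0].
Qed.

End Step.
Lemma compat_ex b : exists e, forall m : int, S (b *~ m) -> k (b *~ m) = e *~ m.
Proof.
case: (pselect (exists n, (0 < n)%N /\ S (b *+ n))) => [ex|nex].
  case: (period ex) => n [n0 Sn dv].
  case: (Ddiv (k (b *+ n)) n0) => e He; exists e => m Sm.
  case/dvdzP: (dv m Sm) => q ->.
  have E1 : forall (M : zmodType) (x : M), x *~ (q * n%:Z) = (x *+ n) *~ q.
    by move=> M x; rewrite mulrC mulrzA.
  by rewrite !E1 akMz // He.
exists 0 => m Sm; rewrite mul0rz.
case: m Sm => [[|n]|n] Sm; first by rewrite ak0.
  by case: nex; exists n.+1.
case: nex; exists n.+1; split => //.
by rewrite -[_ *+ _]opprK; apply: sgN; rewrite NegzE mulrNz in Sm.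
Qed.
End SG.

Section Zorn.
Variables (S0 : B -> Prop) (k0 : B -> D).
Hypotheses (sS0 : subgrp S0) (ak0' : addon S0 k0).

Definition Pz (p : (B -> Prop) * (B -> D)) :=
  [/\ subgrp p.1, addon p.1 p.2, (forall x, S0 x -> p.1 x) &
      (forall x, S0 x -> p.2 x = k0 x)].
Definition Tz := {p | Pz p}.
Definition Rz (p q : Tz) : bool :=
  `[< (forall x, (sval p).1 x -> (sval q).1 x) /\
      (forall x, (sval p).1 x -> (sval q).2 x = (sval p).2 x) >].

Lemma Rz_refl t : Rz t t.
Proof. by apply/asboolP; split. Qed.
Lemma Rz_trans r s t : Rz r s -> Rz s t -> Rz r t.
Proof.
move=> /asboolP [h1 h2] /asboolP [h3 h4]; apply/asboolP; split.
  by move=> x /h1 /h3.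
by move=> x Hx; rewrite h4 ?h2 //; apply: h1.
Qed.

Section Chain.
Variable A : set Tz.
Hypothesis Atot : total_on A Rz.
Hypothesis Ane : exists t, A t.

Definition Uz (x : B) := exists t, A t /\ (sval t).1 x.
Definition kU (x : B) : D :=
  match pselect (Uz x) with
  | left H => (sval (proj1_sig (cid H))).2 x
  | right _ => 0
  end.

Lemma kU_spec t x : A t -> (sval t).1 x -> kU x = (sval t).2 x.
Proof.
move=> At tx; rewrite /kU; case: pselect => [H|[]]; last by exists t.
case: (cid H) => t' [At' t'x] /=.
by case: (Atot At At') => /asboolP [h1 h2]; rewrite ?h2 // -h2.
Qed.

Lemma two_in x y : Uz x -> Uz y -> exists t, [/\ A t, (sval t).1 x & (sval t).1 y].
Proof.
move=> [t1 [A1 x1]] [t2 [A2 y2]].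
case: (Atot A1 A2) => /asboolP [h1 h2]; first by exists t2; split => //; apply: h1.
by exists t1; split => //; apply: h1.
Qed.

Lemma PU : Pz (Uz, kU).
Proof.
case: Ane => t0 At0; case: (svalP t0) => [[s0 _] _ S0s _].
split => /=.
- split; first by exists t0; split.
  move=> x y Ux Uy; case: (two_in Ux Uy) => t [At tx ty].
  by exists t; split => //; case: (svalP t) => [[_ SB] _ _ _]; apply: SB.
- move=> x y Ux Uy; case: (two_in Ux Uy) => t [At tx ty].
  case: (svalP t) => [[_ SB] ak _ _].
  by rewrite !(kU_spec At) //; [apply: ak | apply: SB].
- by move=> x Sx; exists t0; split => //; apply: S0s.
- move=> x Sx; case: (svalP t0) => [_ _ _ e0].
  by rewrite (kU_spec At0) ?e0 //; apply: S0s.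
Qed.

Lemma chain_ub : exists t, forall s, A s -> Rz s t.
Proof.
exists (exist _ _ PU) => s As; apply/asboolP; split => /=.
  by move=> x sx; exists s.
by move=> x sx; rewrite (kU_spec As).
Qed.
End Chain.

Lemma zorn_ext : exists k : B -> D,
  (forall x y, k (x - y) = k x - k y) /\ forall x, S0 x -> k x = k0 x.
Proof.
have P0 : Pz (S0, k0) by split.
pose t0 : Tz := exist _ _ P0.
have ch : forall A : set Tz, total_on A Rz -> exists t, forall s, A s -> Rz s t.
  move=> A Atot; case: (pselect (exists t, A t)) => [Ane|Ae].
    exact: chain_ub.
  by exists t0 => s As; case: Ae; exists s.
have [t tmax] := @ZL_preorder Tz t0 Rz Rz_refl Rz_trans ch.
case: (svalP t) => [sS ak S0s k0s].
have allS : forall b, (sval t).1 b.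
  move=> b; case: (compat_ex sS ak b) => e compat.
  have P' : Pz (S' (sval t).1 b, k' (sval t).1 (sval t).2 b e).
    split => /=.
    - exact: step_sub.
    - exact: step_add.
    - by move=> x /S0s /(step_ext sS ak compat) [].
    - move=> x Sx; have [_ ->] := step_ext sS ak compat (S0s _ Sx).
      exact: k0s.
  have R' : Rz t (exist _ _ P') .
    by apply/asboolP; split => /= x tx; have [] := step_ext sS ak compat tx.
  have /asboolP [h _] := tmax _ R'; apply: h => /=.
  by have [] := step_b sS ak compat.
exists (sval t).2; split => //.
by move=> x y; apply: ak.
Qed.
End Zorn.
End ZExt.

Definition zadd (A B : zmodType) (f : A -> B) := forall x y, f (x - y) = f x - f y.

Lemma zadd0 (A B : zmodType) (f : A -> B) : zadd f -> f 0 = 0.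
Proof. by move=> h; have := h 0 0; rewrite !subrr. Qed.

Lemma qz_inj (A B : zmodType) (f : A -> B) (g : A -> qz) :
  zadd f -> injective f -> zadd g ->
  exists k : B -> qz, zadd k /\ forall a, k (f a) = g a.
Proof.
move=> af fi ag.
pose S0 b := exists a, f a = b.
pose k0 b := match pselect (S0 b) with left H => g (sval (cid H)) | right _ => 0 end.
have k0E a : k0 (f a) = g a.
  rewrite /k0; case: pselect => [H|[]]; last by exists a.
  case: (cid H) => a' /= E; congr g; exact: fi.
have sS : subgrp S0.
  split; first by exists 0; rewrite zadd0.
  by move=> _ _ [a <-] [b <-]; exists (a - b); rewrite af.
have ak : addon S0 k0.
  by move=> _ _ [a <-] [b <-]; rewrite -af !k0E ag.
have [k [kadd kE]] := zorn_ext qz_div sS ak.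
by exists k; split => // a; rewrite kE ?k0E //; exists a.
Qed.

Lemma qz_cogen (A : zmodType) (x : A) : x != 0 ->
  exists k : A -> qz, zadd k /\ k x != 0.
Proof.
move=> x0.
pose S (y : A) := y = 0.
pose k (y : A) := (0 : qz).
have sS : subgrp S by split => // _ _ -> ->; rewrite subrr.
have ak : addon S k by move=> ? ? _ _; rewrite /k subrr.
have [e [e0 compat]] : exists e : qz, e != 0 /\
    forall m : int, S (x *~ m) -> k (x *~ m) = e *~ m.
  case: (pselect (exists n, (0 < n)%N /\ S (x *+ n))) => [ex|nex].
    case: (period sS ex) => n [n0 Sn dv].
    have n1 : (1 < n)%N.
      case: n n0 Sn {dv} => [|[|n]] // _; rewrite /S mulr1n => E.
      by rewrite E eqxx in x0.
    have [ne nm] := qz_cog n1.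
    exists (mkq n%:R^-1); split => // m Sm.
    by case/dvdzP: (dv m Sm) => q ->; have := nm q; rewrite natz => ->.
  have [ne _] := qz_cog (isT : (1 < 2)%N).
  exists (mkq 2%:R^-1); split => // m Sm.
  case: m Sm => [[|n]|n] Sm //; case: nex; exists n.+1; split => //.
  by rewrite /S -[_ *+ _]opprK; rewrite NegzE mulrNz in Sm; rewrite Sm oppr0.
have sub' := step_sub sS x. have add' := step_add sS ak compat.
have [Sx kx] := step_b sS ak compat.
have [K [Kadd KE]] := zorn_ext qz_div sub' add'.
by exists K; split => //; rewrite KE // kx.
Qed.


Lemma subrACA' (V : zmodType) (a b c d : V) : a - b - (c - d) = a - c - (b - d).
Proof. by rewrite !opprB addrACA [RHS]addrACA [- b + _]addrC. Qed.

Lemma zaddN (A B : zmodType) (f : A -> B) : zadd f -> forall x, f (- x) = - f x.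
Proof. by move=> h x; rewrite -sub0r h zadd0 // sub0r. Qed.
Lemma zaddD (A B : zmodType) (f : A -> B) : zadd f -> forall x y, f (x + y) = f x + f y.
Proof. by move=> h x y; have := h x (- y); rewrite opprK => ->; rewrite (zaddN h) opprK. Qed.

Section Cmod.
Variable R : pzRingType.

Definition mkLin (A B : rmodType R) (f : A -> B) (H : linear f) : {linear A -> B} :=
  HB.pack f (GRing.isLinear.Build R^c A B *:%R f H).

Definition addP : {pred R -> qz} := fun f => `[< zadd f >].

Lemma addP_closed : zmod_closed addP.
Proof.
split.
  by rewrite unfold_in; apply/asboolP => x y /=; rewrite subrr.
move=> f g; rewrite !unfold_in => /asboolP af /asboolP ag; apply/asboolP => x y /=.
have E z : (f - g) z = f z - g z by [].
by rewrite !E af ag subrACA'.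
Qed.
HB.instance Definition _ := GRing.isZmodClosed.Build _ addP addP_closed.

Record Cty := CT { cval :> R -> qz; _ : cval \in addP }.
HB.instance Definition _ := [isSub for cval].
HB.instance Definition _ := [Choice of Cty by <:].
HB.instance Definition _ := [SubChoice_isSubZmodule of Cty by <:].

Lemma cvalP (f : Cty) : zadd f.
Proof. by case: f => f /= /[!unfold_in] /asboolP. Qed.

Definition cscale_fun (r : R) (f : Cty) : R -> qz := fun s => f (r * s).
Lemma cscale_in r f : cscale_fun r f \in addP.
Proof.
by rewrite unfold_in; apply/asboolP => x y; rewrite /cscale_fun mulrBr cvalP.
Qed.
Definition cscale (r : R^c) (f : Cty) : Cty := CT (cscale_in r f).

Lemma cscaleA a b v : cscale a (cscale b v) = cscale (a * b) v.
Proof. by apply: val_inj; apply: funext => s /=; rewrite /cscale_fun /= mulrA. Qed.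
Lemma cscale1 : left_id 1 cscale.
Proof. by move=> v; apply: val_inj; apply: funext => s /=; rewrite /cscale_fun /= mul1r. Qed.
Lemma cscaleDr : right_distributive cscale +%R.
Proof. by move=> a u v; apply: val_inj; apply: funext => s. Qed.
Lemma cscaleDl v : {morph cscale^~ v : a b / a + b}.
Proof.
move=> a b; apply: val_inj; apply: funext => s /=; rewrite /cscale_fun /= mulrDl.
by rewrite (zaddD (@cvalP v)).
Qed.

HB.instance Definition _ := GRing.Zmodule_isLmodule.Build R^c Cty
  cscaleA cscale1 cscaleDr cscaleDl.

Lemma cscaleE (r : R^c) (f : Cty) (s : R) : (r *: f) s = f ((r : R) * s).
Proof. by []. Qed.


Section Lift.
Variables (X : rmodType R) (k : X -> qz).
Hypothesis ak : zadd k.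

Definition liftf (y : X) : R -> qz := fun s => k ((s : R^c) *: y).
Lemma liftf_in y : liftf y \in addP.
Proof. by rewrite unfold_in; apply/asboolP => s t; rewrite /liftf scalerBl ak. Qed.
Definition lift0 (y : X) : Cty := CT (liftf_in y).
Lemma lift_lin : linear lift0.
Proof.
move=> a u v; apply: val_inj; apply: funext => s /=.
rewrite /liftf scalerDr scalerA (zaddD ak).
by [].
Qed.
Definition lift := mkLin lift_lin.
Lemma liftE y s : lift y s = k ((s : R^c) *: y).
Proof. by []. Qed.
End Lift.

Lemma C_inj : injective_module Cty.
Proof.
move=> A B f g fi.
pose gb (a : A) := g a 1.
have agb : zadd gb by move=> x y; rewrite /gb linearB.
have af : zadd f by move=> x y; rewrite linearB.
have [k [ak kE]] := qz_inj af fi agb.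
exists (lift ak) => a; apply: val_inj; apply: funext => s /=.
rewrite /liftf -linearZ_LR kE /gb linearZ_LR cscaleE mulr1.
by [].
Qed.

Lemma C_cog (X : rmodType R) (x : X) : x != 0 -> exists h : {linear X -> Cty}, h x != 0.
Proof.
move=> x0; have [k [ak kx]] := qz_cogen x0.
exists (lift ak); apply/negP => /eqP /(congr1 (fun f : Cty => f 1)).
by rewrite liftE scale1r => E; rewrite E in kx.
Qed.
End Cmod.


Section Gen.
Variable R : pzRingType.
Local Notation mkLin := (@mkLin R).

Lemma inj_prod (I : Type) (Q : rmodType R) :
  injective_module Q -> injective_module (I -> Q).
Proof.
move=> iQ A B f g fi.
have gl i : linear (fun a : A => g a i) by move=> a x y; rewrite linearP.
have ex i : exists h : {linear B -> Q}, forall a, h (f a) = g a i.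
  exact: (iQ A B f (mkLin (gl i)) fi).
have [H HE] := choice ex.
have hl : linear (fun b : B => fun i => H i b).
  by move=> a x y; apply: funext => i /=; rewrite linearP.
by exists (mkLin hl) => a; apply: funext => i /=; rewrite HE.
Qed.

Lemma inj_pair (Q1 Q2 : rmodType R) :
  injective_module Q1 -> injective_module Q2 -> injective_module (Q1 * Q2)%type.
Proof.
move=> i1 i2 A B f g fi.
have gl1 : linear (fun a : A => (g a).1) by move=> a x y; rewrite linearP.
have gl2 : linear (fun a : A => (g a).2) by move=> a x y; rewrite linearP.
have [h1 h1E] := i1 A B f (mkLin gl1) fi.
have [h2 h2E] := i2 A B f (mkLin gl2) fi.
have hl : linear (fun b : B => (h1 b, h2 b)).
  by move=> a x y; rewrite !linearP.
by exists (mkLin hl) => a /=; rewrite h1E h2E /=; case: (g a).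
Qed.

Section Img.
Variables (A B : rmodType R) (p : {linear A -> B}).
Definition imP : {pred B} := fun y => `[< exists a, p a = y >].
Lemma imP_closed : subsemimod_closed imP.
Proof.
split; [split|].
- by rewrite unfold_in; apply/asboolP; exists 0; rewrite linear0.
- move=> x y; rewrite !unfold_in => /asboolP [a <-] /asboolP [b <-].
  by apply/asboolP; exists (a + b); rewrite linearD.
- move=> r x; rewrite !unfold_in => /asboolP [a <-].
  by apply/asboolP; exists (r *: a); rewrite linearZ_LR.
Qed.
HB.instance Definition _ := GRing.isSubmodClosed.Build _ _ imP imP_closed.
Record imT := ImT { ival :> B; _ : ival \in imP }.
HB.instance Definition _ := [isSub for ival].
HB.instance Definition _ := [Choice of imT by <:].
HB.instance Definition _ := [SubChoice_isSubLmodule of imT by <:].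
Lemma ival_lin : linear (ival : imT -> B). Proof. by []. Qed.
Lemma imP_p a : p a \in imP.
Proof. by rewrite unfold_in; apply/asboolP; exists a. Qed.
Definition inI a : imT := ImT (imP_p a).
End Img.

Section Ker.
Variables (V W : rmodType R) (h : {linear V -> W}).
Definition kerP : {pred V} := fun x => h x == 0.
Lemma kerP_closed : subsemimod_closed kerP.
Proof.
split; [split|].
- by rewrite /kerP unfold_in /= linear0.
- by move=> x y; rewrite !unfold_in /= linearD => /eqP-> /eqP->; rewrite addr0.
- by move=> a x; rewrite !unfold_in /= linearZ_LR => /eqP->; rewrite scaler0.
Qed.
HB.instance Definition _ := GRing.isSubmodClosed.Build _ _ kerP kerP_closed.
Record kerT := KerT { kval :> V; _ : kval \in kerP }.
HB.instance Definition _ := [isSub for kval].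
HB.instance Definition _ := [Choice of kerT by <:].
HB.instance Definition _ := [SubChoice_isSubLmodule of kerT by <:].
Lemma kval_lin : linear (kval : kerT -> V). Proof. by []. Qed.
Lemma kvalP (m : kerT) : h (kval m) = 0.
Proof. by case: m => v /=; rewrite unfold_in => /eqP. Qed.
End Ker.

Lemma factor (A B Q : rmodType R) (p : {linear A -> B}) (chi : {linear A -> Q}) :
  injective_module Q -> (forall a, p a = 0 -> chi a = 0) ->
  exists b : {linear B -> Q}, forall a, b (p a) = chi a.
Proof.
move=> iQ van.
have wd a a' : p a = p a' -> chi a = chi a'.
  move=> E; apply/eqP; rewrite -subr_eq0 -linearB; apply/eqP/van.
  by rewrite linearB E subrr.
pose psi (y : imT p) : Q := chi (sval (cid (asboolW (valP y)))).
have psiE a (y : imT p) : p a = val y -> psi y = chi a.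
  move=> E; rewrite /psi; case: cid => a' /= E'; apply: wd; by rewrite E'.
have pl : linear psi.
  move=> r y z; have [a Ea] := asboolW (valP y); have [b Eb] := asboolW (valP z).
  rewrite (psiE a y) // (psiE b z) // (psiE (r *: a + b) (r *: y + z)) ?linearP //.
  by rewrite Ea Eb.
have vi : injective (@ival A B p) by apply: val_inj.
have [b bE] := iQ _ _ (mkLin (@ival_lin A B p)) (mkLin pl) vi.
exists b => a; have := bE (inI p a); rewrite /= => ->.
by rewrite (psiE a).
Qed.

Lemma prod_is_product (I : Type) (X : rmodType R) :
  is_product (fun i : I => mkLin (fun (a : R^c) (x y : I -> X) => erefl : (a *: x + y) i = a *: x i + y i)).
Proof.
move=> Y g.
have hl : linear (fun y : Y => fun i => g i y).
  by move=> a x y; apply: funext => i /=; rewrite linearP.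
exists (mkLin hl); split => // h' h'E y.
by apply: funext => i /=; exact: h'E.
Qed.

Section Bc.
Variables (Q0 Q1 : rmodType R) (zeta : {linear Q0 -> Q1}).

Lemma B_sub (X P : rmodType R) (e : {linear X -> P}) :
  injective_module Q1 -> injective e -> B_class zeta P -> B_class zeta X.
Proof.
move=> iQ1 ei BP g.
have [h hE] := iQ1 _ _ e g ei.
have [f fE] := BP h.
have fl : linear (fun x => f (e x)) by move=> a x y; rewrite !linearP.
by exists (mkLin fl) => x /=; rewrite fE hE.
Qed.

Lemma B_pair (X Y : rmodType R) :
  B_class zeta X -> B_class zeta Y -> B_class zeta (X * Y)%type.
Proof.
move=> BX BY g.
have gl1 : linear (fun x : X => g (x, 0)).
  by move=> a x y; rewrite -linearP; f_equal; apply/pair_equal_spec; split => /=; rewrite ?scaler0 ?addr0.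
have gl2 : linear (fun y : Y => g (0, y)).
  by move=> a x y; rewrite -linearP; f_equal; apply/pair_equal_spec; split => /=; rewrite ?scaler0 ?addr0.
have [f1 f1E] := BX (mkLin gl1).
have [f2 f2E] := BY (mkLin gl2).
have fl : linear (fun p : X * Y => f1 p.1 + f2 p.2).
  by move=> a x y /=; rewrite !linearP addrACA scalerDr.
exists (mkLin fl) => -[x y] /=; rewrite linearD f1E f2E /= -linearD /=.
by f_equal; apply/pair_equal_spec; split => /=; rewrite ?addr0 ?add0r.
Qed.

Lemma lift_prod (X : rmodType R) (I : Type) : B_class zeta X ->
  forall g : {linear X -> (I -> Q1)},
  exists f : {linear X -> (I -> Q0)}, forall x i, zeta (f x i) = g x i.
Proof.
move=> BX g.
have gl i : linear (fun x : X => g x i) by move=> a x y; rewrite linearP.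
have ex i := BX (mkLin (gl i)).
have [F FE] := choice ex.
have fl : linear (fun x : X => fun i => F i x).
  by move=> a x y; apply: funext => i /=; rewrite linearP.
by exists (mkLin fl) => x i /=; rewrite FE.
Qed.
End Bc.
End Gen.


Lemma fadd (I : Type) (V : zmodType) (f g : I -> V) i : (f + g) i = f i + g i.
Proof. by []. Qed.
Lemma fscale (K : pzRingType) (I : Type) (V : lmodType K) (a : K) (f : I -> V) i :
  (a *: f) i = a *: f i.
Proof. by []. Qed.

Section Main.
Variables (R : pzRingType) (T Q0 Q1 : rmodType R)
  (iota : {linear T -> Q0}) (zeta : {linear Q0 -> Q1}).
Hypothesis pc : partial_cosilting iota zeta.
Local Notation mkLin := (@mkLin R).

Let cop : injective_copresentation iota zeta. Proof. by case: pc. Qed.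
Let iQ0 : injective_module Q0. Proof. by case: cop. Qed.
Let iQ1 : injective_module Q1. Proof. by case: cop. Qed.
Let ii : injective iota. Proof. by case: cop. Qed.
Let kerz q : zeta q = 0 <-> exists t, iota t = q. Proof. by case: cop. Qed.
Let BT : B_class zeta T. Proof. by case: pc. Qed.
Let Bprod : closed_under_products (B_class zeta). Proof. by case: pc. Qed.

Lemma zi t : zeta (iota t) = 0.
Proof. by apply/kerz; exists t. Qed.

Lemma BTI (I : Type) : B_class zeta (I -> T).
Proof. refine (@Bprod I (fun _ => T) (I -> T) _ (@prod_is_product R I T) (fun _ => BT)). Qed.

Lemma homotopy0 (I : Type) (chi : {linear (I -> Q0) -> Q1}) :
  exists (a : {linear (I -> Q0) -> Q0}) (b : {linear (I -> Q1) -> Q1}),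
    forall q, chi q = zeta (a q) + b (fun i => zeta (q i)).
Proof.
have il : linear (fun t : I -> T => fun i => iota (t i)).
  by move=> r x y; apply: funext => i /=; rewrite linearP.
have iiI : injective (mkLin il).
  by move=> x y /= E; apply: funext => i; apply: ii; move: E => /(congr1 (fun f => f i)).
have cl : linear (fun t : I -> T => chi (mkLin il t)) by move=> r x y; rewrite !linearP.
have [a0 a0E] := BTI (mkLin cl).
have [a aE] := @iQ0 _ _ _ a0 iiI.
have zl : linear (fun q : I -> Q0 => fun i => zeta (q i)).
  by move=> r x y; apply: funext => i /=; rewrite linearP.
have dl : linear (fun q : I -> Q0 => chi q - zeta (a q)).
  by move=> r x y; rewrite (linearP chi) (linearP a) (linearP zeta) scalerBr addrACA opprD.
have van : forall q, mkLin zl q = 0 -> mkLin dl q = 0.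
  move=> q /= E.
  have ex i : exists t, iota t = q i by apply/kerz; move: E => /(congr1 (fun f => f i)).
  have [t tE] := choice ex.
  have -> : q = mkLin il t by apply: funext => i /=; rewrite tE.
  by rewrite aE /= a0E /= subrr.
have [b bE] := @factor R _ _ _ (mkLin zl) (mkLin dl) iQ1 van.
exists a, b => q; have := bE q; rewrite /= => ->.
by rewrite addrC subrK.
Qed.

Definition Cm := Cty R.
Definition Iset := {linear Cm -> Q1}.
Lemma u_lin : linear (fun (c : Cm) (phi : Iset) => phi c).
Proof. by move=> r x y; apply: funext => phi /=; rewrite linearP. Qed.
Definition u := mkLin u_lin.
Definition E0P := (Cm * (Iset -> Q0))%type.
Lemma zM_lin : linear (fun e : E0P => u e.1 + (fun i => zeta (e.2 i))).
Proof.
move=> r x y.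
have E1P : (r *: x + y).1 = r *: x.1 + y.1 by [].
have E2 : (r *: x + y).2 = r *: x.2 + y.2 by [].
rewrite E1P E2 (linearP u).
have -> : (fun i => zeta ((r *: x.2 + y.2) i)) =
    r *: (fun i => zeta (x.2 i)) + (fun i => zeta (y.2 i)).
  by apply: funext => i; rewrite /= linearP.
by rewrite scalerDr addrACA.
Qed.
Definition zM := mkLin zM_lin.
Lemma zM_E (e : E0P) (i : Iset) : zM e i = i e.1 + zeta (e.2 i).
Proof. by []. Qed.
Definition Mm := kerT zM.

Lemma Mrel (m : Mm) (i : Iset) : i (kval m).1 + zeta ((kval m).2 i) = 0.
Proof. by have := kvalP m; move=> /(congr1 (fun f => f i)). Qed.

Lemma M_in_B : B_class zeta Mm.
Proof.
move=> g.
have kvi : injective (mkLin (@kval_lin R E0P _ zM)) by apply: val_inj.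
have [gt gtE] := @iQ1 _ _ _ g kvi.
have phil : linear (fun c : Cm => gt (c, 0)).
  by move=> r x y; rewrite -linearP; f_equal; apply/pair_equal_spec; split => /=; rewrite ?scaler0 ?addr0.
pose phi : Iset := mkLin phil.
have chil : linear (fun q : Iset -> Q0 => gt (0, q) - zeta (q phi)).
  move=> r x y.
  have -> : ((0 : Cm), r *: x + y) = r *: (0, x) + (0, y).
    by apply/pair_equal_spec; split => /=; rewrite ?scaler0 ?addr0.
  by rewrite (linearP gt) (linearP zeta) scalerBr addrACA opprD.
have [a [b abE]] := homotopy0 (mkLin chil).
have phi'l : linear (fun c : Cm => b (u c)) by move=> r x y; rewrite !linearP.
pose phi' : Iset := mkLin phi'l.
have fl : linear (fun m : Mm => a (kval m).2 + (kval m).2 phi').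
  by move=> r x y /=; rewrite linearP addrACA scalerDr.
exists (mkLin fl) => m /=.
rewrite -gtE /=; case: m => [[c q] Hm] /=.
have rel (i : Iset) : i c + zeta (q i) = 0 := Mrel (KerT Hm) i.
have E1P : (c, q) = (c, 0) + (0, q) :> E0P.
  by apply/pair_equal_spec; split => /=; rewrite ?addr0 ?add0r.
rewrite E1P (linearD gt) linearD.
have E2 : gt (0, q) = zeta (a q) + b (fun i => zeta (q i)) + zeta (q phi).
  by have := abE q; rewrite /= => <-; rewrite subrK.
have E3 : (fun i => zeta (q i)) = - u c.
  by apply: funext => i /=; apply/eqP; rewrite -subr_eq0 opprK addrC rel.
rewrite E2 E3 linearN.
have := rel phi; have := rel phi'; rewrite /= => r1 r2.
apply/eqP; rewrite -subr_eq0; apply/eqP.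
have -> : b (u c) = - zeta (q phi') by apply/eqP; rewrite -subr_eq0 opprK r1.
have -> : gt (c, 0) = - zeta (q phi) by apply/eqP; rewrite -subr_eq0 opprK r2.
by rewrite opprK [- zeta (q phi) + _]addrC addrK subrr.
Qed.

Definition Q0P := (Q0 * E0P)%type.
Definition E1P := (Iset -> Q1).
Definition Q1P := (Q1 * E1P)%type.
Lemma iotaP_lin : linear (fun p : (T * Mm)%type => (iota p.1, kval p.2) : Q0P).
Proof. by move=> r x y; apply/pair_equal_spec; split => //=; apply: linearP. Qed.
Definition iotaP := mkLin iotaP_lin.
Lemma zetaP_lin : linear (fun p : Q0P => (zeta p.1, zM p.2) : Q1P).
Proof. move=> r x y; apply/pair_equal_spec; split; [exact: (linearP zeta r x.1 y.1) | exact: (linearP zM r x.2 y.2)]. Qed.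
Definition zetaP := mkLin zetaP_lin.

Lemma copres' : injective_copresentation iotaP zetaP.
Proof.
split.
- apply: inj_pair => //; apply: inj_pair; [exact: C_inj | exact: inj_prod].
- by apply: inj_pair => //; apply: inj_prod.
- move=> [t1 m1] [t2 m2] /= /pair_equal_spec [/ii -> E].
  by congr pair; apply: val_inj.
- move=> [q e]; split.
    move=> /pair_equal_spec [/kerz [t tq] ze].
    have em : e \in kerP zM by rewrite unfold_in ze.
    by exists (t, KerT em); rewrite /= tq.
  move=> [[t m] /pair_equal_spec [<- <-]].
  by apply/pair_equal_spec; split; [exact: zi | exact: kvalP].
Qed.

Lemma Bequiv (X : rmodType R) : B_class zeta X <-> B_class zetaP X.
Proof.
split.
  move=> BX g.
  have gl1 : linear (fun x : X => (g x).1) by move=> r x y; rewrite linearP.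
  have gl2 : linear (fun x : X => (g x).2) by move=> r x y; rewrite linearP.
  have [f1 f1E] := BX (mkLin gl1).
  have [k kE] := lift_prod BX (mkLin gl2).
  have fl : linear (fun x : X => (f1 x, ((0 : Cm), k x)) : Q0P).
    move=> r x y; apply/pair_equal_spec; split; first by rewrite linearP.
    by apply/pair_equal_spec; split; rewrite /= ?linearP // scaler0 addr0.
  exists (mkLin fl) => x.
  rewrite [RHS]surjective_pairing; apply/pair_equal_spec; split; first exact: f1E.
  apply: funext => i; transitivity (zM ((0 : Cm), k x) i); first by [].
  rewrite zM_E /= linear0 add0r; exact: kE.
move=> BX' g.
have gl : linear (fun x : X => (g x, 0) : Q1P).
  by move=> r x y; apply/pair_equal_spec; split; rewrite /= ?linearP // scaler0 addr0.
have [f fE] := BX' (mkLin gl).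
have fl : linear (fun x : X => (f x).1) by move=> r x y; rewrite linearP.
exists (mkLin fl) => x /=.
by have := fE x; move=> /pair_equal_spec [].
Qed.

Lemma cogen_equiv (X : rmodType R) : Cogen (T * Mm)%type X <-> B_class zeta X.
Proof.
split.
  move=> [I [f fi]].
  have el : linear (fun x : X => fun i => f i x).
    by move=> r x y; apply: funext => i /=; rewrite linearP.
  have ei : injective (mkLin el).
    move=> x y /= E; apply/eqP; rewrite -subr_eq0; apply/eqP/fi => i.
    by rewrite linearB /=; move: E => /(congr1 (fun F => F i)) ->; rewrite subrr.
  apply: (B_sub iQ1 ei).
  exact: (@Bprod I (fun _ => (T * Mm)%type) (I -> (T * Mm)%type) _
     (@prod_is_product R I (T * Mm)%type) (fun _ => B_pair BT M_in_B)).
move=> BX.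
pose J := {linear X -> Cm}.
have ex (h : J) : exists mh : {linear X -> Mm}, forall x, (kval (mh x)).1 = h x.
  have gl : linear (fun x : X => - u (h x)) by move=> r x y; rewrite (linearP h) (linearP u) opprD scalerN.
  have [k kE] := lift_prod BX (mkLin gl).
  have inK x : ((h x, k x) : E0P) \in kerP zM.
    rewrite unfold_in; apply/eqP; apply: funext => i.
    rewrite zM_E /= kE; transitivity (i (h x) - i (h x)); [by [] | by rewrite subrr].
  have ml : linear (fun x : X => KerT (inK x)).
    move=> r x y; apply: val_inj => /=.
    by apply/pair_equal_spec; split; rewrite /= linearP.
  by exists (mkLin ml).
have [F FE] := choice ex.
have fl (h : J) : linear (fun x : X => ((0 : T), F h x)).
  by move=> r x y; apply/pair_equal_spec; split; rewrite /= ?linearP // scaler0 addr0.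
exists J, (fun h => mkLin (fl h)) => x x0.
apply/eqP; apply/negPn/negP => xn0.
have [h hx] := C_cog xn0.
have := x0 h; move=> /pair_equal_spec [_ /(congr1 (fun m : Mm => (kval m).1))].
rewrite /= FE => E; rewrite E in hx.
by rewrite eqxx in hx.
Qed.

Lemma main_result : cosilting iotaP zetaP /\
  (forall X : rmodType R, B_class zeta X <-> B_class zetaP X).
Proof.
split; last exact: Bequiv.
split; first exact: copres'.
move=> X; rewrite cogen_equiv; exact: Bequiv.
Qed.
End Main.


Theorem theorem3p12 (R : pzRingType) (T Q0 Q1 : rmodType R)
  (iota : {linear T -> Q0}) (zeta : {linear Q0 -> Q1}) :
  partial_cosilting iota zeta ->
  exists (M Q0' Q1' : rmodType R) (iota' : {linear (T * M)%type -> Q0'})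
         (zeta' : {linear Q0' -> Q1'}),
    cosilting iota' zeta' /\
    (forall X : rmodType R, B_class zeta X <-> B_class zeta' X).
Proof.
move=> pc; do 5 eexists; exact: (main_result pc).
Qed.
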